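(* For every positive integer $n$ and every nonnegative integer $q$, $$\left\langle\!\left\langle{n\atop q}\right\rangle\!\right\rangle=\sum_{i=0}^n(-1)^{q-i}\binom{n-i-1}{q-i}\left\{\!\left\{{n+i+1\atop i+1}\right\}\!\right\}.$$
   Context: Binomial coefficients are $\binom{a}{b}=a(a-1)\cdots(a-b+1)/b!$ for integers $b\ge0$ (any integer $a$) and $\binom{a}{b}=0$ for $b<0$. The second-order Eulerian numbers $\langle\langle{n\atop k}\rangle\rangle$ are defined by $\langle\langle{0\atop k}\rangle\rangle=1$ if $k=0$ and $0$ otherwise, $\langle\langle{n\atop k}\rangle\rangle=0$ for $k<0$, and $\langle\langle{n\atop k}\rangle\rangle=(k+1)\langle\langle{n-1\atop k}\rangle\rangle+(2n-k-1)\langle\langle{n-1\atop k-1}\rangle\rangle$ for $n\ge1$. The second-order Stirling numbers $\{\{{n\atop k}\}\}$ are the numbers of partitions of an $n$-element set into $k$ blocks each of size at least $2$; equivalently $\{\{{0\atop 0}\}\}=1$, $\{\{{n\atop k}\}\}=0$ when $n<0$ or $k\le0$ with $(n,k)\ne(0,0)$, and $\{\{{n\atop k}\}\}=k\{\{{n-1\atop k}\}\}+(n-1)\{\{{n-2\atop k-1}\}\}$ for $n\ge1$. *)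

(* Defs.v *)
From mathcomp Require Import all_boot all_order all_algebra.
Set Implicit Arguments. Unset Strict Implicit. Unset Printing Implicit Defensive.
Import Order.TTheory GRing.Theory Num.Theory.
Local Open Scope ring_scope.

Definition gbinom (a b : int) : rat :=
  match b with
  | Posz m => (\prod_(j < m) (a%:~R - (j : nat)%:R)) / (m`!)%:R
  | Negz _ => 0
  end.

(* Second-order Eulerian numbers <<n k>> (k < 0 gives 0, so k : nat). *)
Fixpoint euler2 (n k : nat) : int :=
  match n with
  | 0 => (k == 0%N)%:R
  | m.+1 => (k.+1)%:R * euler2 m k
            + match k with
              | 0 => 0
              | k'.+1 => ((2 * m.+1)%:Z - k%:Z - 1) * euler2 m k'
              end
  end.

(* Second-order Stirling numbers {{n k}} via the recurrence
   {{n k}} = k {{n-1 k}} + (n-1) {{n-2 k-1}}, with value 0 at negative n. *)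
Fixpoint stirling2o (n k : nat) : nat :=
  match n with
  | 0 => (k == 0%N)
  | 1 => k * (k == 0%N)
  | (p.+1 as m).+1 => k * stirling2o m k
                      + m * (match k with 0 => 0 | k'.+1 => stirling2o p k' end)
  end.

(* Main.v *)
Require Import Defs.
From mathcomp Require Import all_boot all_order all_algebra.
From mathcomp Require Import ring zify.
Import Order.TTheory GRing.Theory Num.Theory.
Local Open Scope ring_scope.

Lemma stirSS M k : stirling2o M.+2 k =
  (k * stirling2o M.+1 k + M.+1 * (if k is k'.+1 then stirling2o M k' else 0))%N.
Proof. by []. Qed.

Lemma stir_small N k : (N < k.*2)%N -> stirling2o N k = 0%N.
Proof.
elim: N {-2}N (leqnn N) k => [|N IH] M HM k Hk.
  by move: HM; rewrite leqn0 => /eqP ->; case: k Hk.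
case: M HM Hk => [|[|M]] HM Hk; first by case: k Hk.
  by case: k Hk => //= k _; rewrite muln0.
rewrite stirSS.
rewrite (IH M.+1) ?muln0 ?add0n; last 2 first.
- lia.
- lia.
case: k Hk => [|k] Hk //=.
rewrite (IH M) ?muln0 //; lia.
Qed.

Lemma stir0 m : stirling2o m.+1 0 = 0%N.
Proof. by case: m => [|m] //; rewrite stirSS muln0. Qed.

Definition s (n i : nat) : nat := stirling2o (n + i + 1) i.+1.

Lemma s_diag n : s n n = 0%N.
Proof. by rewrite /s stir_small // doubleS -addnn addn1 !ltnS leqnn. Qed.

Lemma s_rec n i : (0 < n)%N ->
  s n.+1 i = ((i.+1) * s n i + (if i is i'.+1 then (n.+1 + i) * s n i' else 0))%N.
Proof.
move=> Hn; rewrite /s.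
have -> : (n.+1 + i + 1 = (n + i).+2)%N by rewrite addn1 addSn.
rewrite stirSS.
case: i => [|i].
  rewrite !addn0 addn1; case: n Hn => // n _.
  by rewrite stir0 muln0 addn0.
rewrite !addn1 addnS addSn.
by rewrite -addnS.
Qed.

Lemma prod_ffact (a b : nat) :
  \prod_(j < b) ((a%:R : rat) - (j : nat)%:R) = (a ^_ b)%:R.
Proof.
elim: b => [|b IH]; first by rewrite big_ord0 ffactn0.
rewrite big_ord_recr /= IH ffactnSr.
case: (leqP b a) => Hb; first by rewrite natrM natrB.
by rewrite ffact_small // mul0n mul0r.
Qed.

Lemma gbinom_nat (a b : nat) : gbinom (Posz a) (Posz b) = ('C(a, b))%:R.
Proof.
rewrite /gbinom.
have -> : ((Posz a)%:~R : rat) = a%:R by [].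
rewrite prod_ffact -bin_ffact natrM mulfK //.
by rewrite pnatr_eq0 -lt0n fact_gt0.
Qed.

Definition Y : {poly rat} := 1 - 'X.

Definition L (m : nat) (P : {poly rat}) : {poly rat} :=
  (1 + 'X *+ (2 * m + 2)) * P + 'X * Y * P^`().

Lemma XdXn i : 'X * ('X^i)^`() = 'X^i *+ i :> {poly rat}.
Proof.
rewrite derivXn; case: i => [|i]; first by rewrite !mulr0n mulr0.
by rewrite /= mulrnAr exprS.
Qed.

Lemma YdYk k : Y * (Y ^+ k)^`() = - (Y ^+ k *+ k).
Proof.
rewrite deriv_exp.
have -> : Y^`() = -1 by rewrite /Y derivB derivC derivX sub0r.
case: k => [|k]; first by rewrite !mulr0n mulr0 oppr0.
by rewrite /= mulrnAr mulN1r mulrN exprS mulNrn.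
Qed.

Lemma L_basis m i : (i <= m)%N ->
  L m ('X^i * Y ^+ (m - i)%N) =
  (('X^i * Y ^+ (m - i).+1%N) *+ (i.+1)) + (('X^(i.+1) * Y ^+ (m - i)%N) *+ (m + 3 + i)%N).
Proof.
move=> Him; set k := (m - i)%N.
have Em : m = (i + k)%N by rewrite /k subnKC.
rewrite /L derivM.
have -> : 'X * Y * (('X^i)^`() * Y ^+ k + 'X^i * (Y ^+ k)^`())
   = Y * Y ^+ k * ('X * ('X^i)^`()) + 'X * 'X^i * (Y * (Y ^+ k)^`()) by ring.
rewrite XdXn YdYk Em !exprSr /Y.
rewrite !mulrnAr. ring.
Qed.

Lemma LD m P Q : L m (P + Q) = L m P + L m Q.
Proof. rewrite /L derivD; ring. Qed.

Lemma LMn m P c : L m (P *+ c) = L m P *+ c.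
Proof. by rewrite /L derivMn !mulrnAr mulrnDl. Qed.

Lemma L0 m : L m 0 = 0.
Proof. by rewrite /L deriv0 !mulr0 addr0. Qed.

Lemma L_sum m (I : finType) (F : I -> {poly rat}) :
  L m (\sum_(i : I) F i) = \sum_(i : I) L m (F i).
Proof.
apply: (big_morph (L m)); [exact: LD | exact: L0].
Qed.

Definition A (m : nat) : {poly rat} :=
  \sum_(i < m.+1) ('X^i * Y ^+ (m - i)%N) *+ s m.+1 i.

Lemma A_step m : A m.+1 = L m (A m).
Proof.
rewrite /A L_sum; symmetry.
under eq_bigr => i _ do rewrite LMn (L_basis m i (ltn_ord i)) mulrnDl.
rewrite big_split /=; symmetry.
under eq_bigr => i _ do rewrite (s_rec _ i (ltn0Sn m)) mulrnDr.
rewrite big_split /=.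
congr (_ + _).
  rewrite big_ord_recr /= s_diag muln0 mulr0n addr0.
  apply: eq_bigr => i _.
  by rewrite -mulrnA mulnC subSn // -ltnS.
rewrite big_ord_recl /= mulr0n add0r.
apply: eq_bigr => i _.
rewrite /bump /= add0n -mulrnA subSS; congr (_ *+ _).
by have -> : (m.+2 + (1 + i) = m + 3 + i)%N by lia.
Qed.

Lemma L_coef0 m P : (L m P)`_0 = P`_0.
Proof.
have -> : L m P = P + ('X * P) *+ (2 * m + 2) + 'X * P^`() - 'X * ('X * P^`()).
  rewrite /L /Y; ring.
by rewrite !coefB !coefD coefMn !coefXM /= mul0rn subr0 !addr0.
Qed.

Lemma L_coefS m P q : (L m P)`_q.+1 =
  (q.+2)%:R * P`_q.+1 + ((2 * m + 2)%:R - q%:R) * P`_q.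
Proof.
have -> : L m P = P + ('X * P) *+ (2 * m + 2) + 'X * P^`() - 'X * ('X * P^`()).
  rewrite /L /Y; ring.
rewrite !coefB !coefD coefMn !coefXM /= !coef_deriv.
case: q => [|q].
  rewrite eqxx subr0. ring.
rewrite /=. ring.
Qed.

Lemma euler2SS m q : euler2 m.+1 q =
  (q.+1)%:R * euler2 m q + (if q is q'.+1 then ((2 * m.+1)%:Z - q%:Z - 1) * euler2 m q' else 0).
Proof. by []. Qed.

Lemma intr_lin (a b c d : int) :
  ((a * b + c * d)%:~R : rat) = a%:~R * b%:~R + c%:~R * d%:~R.
Proof. by rewrite intrD !intrM. Qed.

Lemma A_coef m q : (A m)`_q = (euler2 m.+1 q)%:~R.
Proof.
elim: m q => [|m IH] q.
  rewrite /A big_ord1 /= mulr1 mulr1n coef1.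
  case: q => [|[|q]] //=.
  by rewrite !mulr0 add0r.
rewrite A_step euler2SS.
case: q => [|q].
  by rewrite L_coef0 IH addr0 mul1r.
rewrite L_coefS !IH.
rewrite (intr_lin (q.+2%:R) (euler2 m.+1 q.+1)).
congr (_ + _); first by rewrite rmorph_nat.
congr (_ * _).
rewrite !intrB.
have -> : forall n : nat, ((Posz n)%:~R : rat) = n%:R by [].
rewrite !natrM !natrD. ring.
Qed.

Lemma coefY k r : (Y ^+ k)`_r = (-1) ^+ r * ('C(k, r))%:R.
Proof.
elim: k r => [|k IH] r.
  rewrite expr0 coef1; case: r => [|r]; first by rewrite expr0 mul1r.
  by rewrite bin0n mulr0.
have -> : Y ^+ k.+1 = Y ^+ k - 'X * Y ^+ k by rewrite exprS /Y mulrBl mul1r.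
rewrite coefB coefXM; case: r => [|r] /=.
  by rewrite subr0 IH !bin0 !expr0.
rewrite !IH binS natrD exprS. ring.
Qed.

Theorem corollary5 (n q : nat) : (0 < n)%N ->
  (euler2 n q)%:~R =
  \sum_(i < n.+1)
     (-1 : rat) ^ (q%:Z - (i : nat)%:Z)
     * gbinom (n%:Z - (i : nat)%:Z - 1) (q%:Z - (i : nat)%:Z)
     * (stirling2o (n + i + 1) (i.+1))%:R.
Proof.
case: n => [//|m] _.
rewrite -A_coef /A [RHS]big_ord_recr.
have -> : stirling2o (m.+1 + (@ord_max m.+1 : nat) + 1) (@ord_max m.+1 : nat).+1 = 0%N by exact: s_diag.
rewrite mulr0 Monoid.mulm1 coef_sum.
apply: eq_bigr => i _.
rewrite coefMn coefXnM -[LHS]mulr_natr /=.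
have Him : (i <= m)%N by rewrite -ltnS.
congr (_ * _).
case: (ltnP q i) => Hqi.
  have -> : (q%:Z - (i : nat)%:Z) = Negz (i - q - 1)%N.
    rewrite NegzE; lia.
  by rewrite mulr0.
rewrite subzn // coefY.
have -> : (m.+1%:Z - (i : nat)%:Z - 1) = Posz (m - i)%N by lia.
by rewrite gbinom_nat.
Qed.
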